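(* Let $\mathcal A$ be a weakly idempotent complete pre-additive category and $M$ a simplicial module in $\mathcal A$. For every $n\ge0$ the family $\{\partial_{n,i}:M_n\to M_{n-1}\}_{1\le i\le n}$ has a joint kernel $\iota:N_n(M)\to M_n$ (the ''intersection'' $\bigcap_{i=1}^n\ker\partial_{n,i}$), and the idempotent $p_n$ splits through it: there is $r:M_n\to N_n(M)$ with $r\iota=1$ and $\iota r=p_n$. Consequently $M_n\cong N_n(M)\oplus D_n(M)$ where $D_n(M)$ is the image (splitting) of $1-p_n$.
   Context: Let $\mathcal A$ be a pre-additive category. Let $\Delta$ be the category with objects $[n]$, $n\ge0$, and morphisms $[m]\to[n]$ the weakly monotone maps $f:\mathbb Z\to\mathbb Z$ with $f(j+m+1)=f(j)+n+1$, $f(0)\ge0$, $f(m)\le n$ (equivalently, weakly monotone maps $\{0,\dots,m\}\to\{0,\dots,n\}$). Let $\varepsilon^n_i:[n-1]\to[n]$ ($0\le i\le n$) skip $i$ ($\varepsilon^n_i(j)=j$ for $j<i$, $j+1$ for $j\ge i$), and $\eta^n_i:[n+1]\to[n]$ ($0\le i\le n$) repeat $i$ ($\eta^n_i(j)=j$ for $j\le i$, $j-1$ for $j>i$). A simplicial module is a functor $M:\Delta^{op}\to\mathcal A$; write $M_n=M([n])$, $\partial_{n,i}=M(\varepsilon^n_i):M_n\to M_{n-1}$, $s_{n,i}=M(\eta^n_i):M_n\to M_{n+1}$. Define $p_n=(1-s_{n-1,0}\partial_{n,1})(1-s_{n-1,1}\partial_{n,2})\cdots(1-s_{n-1,n-1}\partial_{n,n})$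 ($p_0=1$). A pre-additive category is weakly idempotent complete if every morphism $f$ admitting $g$ with $fg=1$ has a kernel. An idempotent $p$ on $A$ splits if $p=\iota r$ with $r\iota=1$. *)

(* Defs.v *)
From HB Require Import structures.
From mathcomp Require Import all_boot all_order all_algebra.
From mathcomp Require Import zify.
Set Implicit Arguments. Unset Strict Implicit. Unset Printing Implicit Defensive.
Import Order.TTheory GRing.Theory.
Local Open Scope ring_scope.

Record PreAdditive := {
  Obj : Type;
  Mor : Obj -> Obj -> zmodType;
  mcomp : forall A B C : Obj, Mor B C -> Mor A B -> Mor A C;
  idm : forall A : Obj, Mor A A;
  compA : forall A B C D (h : Mor C D) (g : Mor B C) (f : Mor A B),
      mcomp h (mcomp g f) = mcomp (mcomp h g) f;
  comp1l : forall A B (f : Mor A B), mcomp (idm B) f = f;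
  comp1r : forall A B (f : Mor A B), mcomp f (idm A) = f;
  compDl : forall A B C (g1 g2 : Mor B C) (f : Mor A B),
      mcomp (g1 + g2) f = mcomp g1 f + mcomp g2 f;
  compDr : forall A B C (g : Mor B C) (f1 f2 : Mor A B),
      mcomp g (f1 + f2) = mcomp g f1 + mcomp g f2
}.
Arguments Mor : clear implicits.
Arguments mcomp {_ A B C}.
Arguments idm {_}.

Definition is_kernel (C : PreAdditive) (A B K : Obj C) (f : Mor C A B) (k : Mor C K A) : Prop :=
  mcomp f k = 0 /\
  forall (X : Obj C) (h : Mor C X A), mcomp f h = 0 -> exists! u : Mor C X K, mcomp k u = h.

Definition weakly_idem_complete (C : PreAdditive) : Prop :=
  forall (A B : Obj C) (f : Mor C A B) (g : Mor C B A), mcomp f g = idm B ->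
    exists (K : Obj C) (k : Mor C K A), is_kernel f k.

(* morphisms [m] -> [n] : weakly monotone maps {0..m} -> {0..n} *)
Definition monob (m n : nat) (f : {ffun 'I_m.+1 -> 'I_n.+1}) : bool :=
  [forall i : 'I_m.+1, forall j : 'I_m.+1, (i <= j)%N ==> (f i <= f j)%N].

Definition Delta (m n : nat) := {f : {ffun 'I_m.+1 -> 'I_n.+1} | monob f}.
Definition mkDelta m n (f : {ffun 'I_m.+1 -> 'I_n.+1}) (H : monob f) : Delta m n :=
  exist (fun g => monob g) f H.

Lemma monob_id n : monob [ffun i : 'I_n.+1 => i].
Proof. by apply/forallP => i; apply/forallP => j; rewrite !ffunE; apply/implyP. Qed.

Definition delta_id n : Delta n n := mkDelta (monob_id n).

Lemma monob_comp l m n (g : Delta m n) (f : Delta l m) :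
  monob [ffun i => sval g (sval f i)].
Proof.
case: g f => g Hg [f Hf] /=.
apply/forallP => i; apply/forallP => j; rewrite !ffunE; apply/implyP => Hij.
have H1 : (f i <= f j)%N by move/forallP: Hf => /(_ i) /forallP /(_ j) /implyP; apply.
by move/forallP: Hg => /(_ (f i)) /forallP /(_ (f j)) /implyP; apply.
Qed.

Definition delta_comp l m n (g : Delta m n) (f : Delta l m) : Delta l n :=
  mkDelta (monob_comp g f).

(* coface coface^{n+1}_i : [n] -> [n+1], skipping i (j |-> j if j < i, j+1 if j >= i);
   this is exactly mathcomp's [lift i]. *)
Lemma monob_eps n (i : 'I_n.+2) : monob [ffun j : 'I_n.+1 => lift i j].
Proof.
apply/forallP => j; apply/forallP => k; rewrite !ffunE /=; apply/implyP => Hjk.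
rewrite /bump; case: (leqP i j); case: (leqP i k) => /= *; lia.
Qed.
Definition coface n (i : 'I_n.+2) : Delta n n.+1 := mkDelta (monob_eps i).

Definition eta_fun n (i : 'I_n.+1) (j : 'I_n.+2) : 'I_n.+1 :=
  inord (if (j <= i)%N then (j : nat) else (j : nat).-1).

Lemma eta_funE n (i : 'I_n.+1) (j : 'I_n.+2) :
  (eta_fun i j : nat) = if (j <= i)%N then (j : nat) else (j : nat).-1.
Proof.
rewrite /eta_fun inordK //; have := ltn_ord i; have := ltn_ord j.
case: ifP => *; lia.
Qed.

Lemma monob_eta n (i : 'I_n.+1) : monob [ffun j => eta_fun i j].
Proof.
apply/forallP => j; apply/forallP => k; rewrite !ffunE /= !eta_funE.
apply/implyP => Hjk; case: ifP; case: ifP => /= *; lia.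
Qed.
Definition codeg n (i : 'I_n.+1) : Delta n.+1 n := mkDelta (monob_eta i).

Record SimplicialModule (C : PreAdditive) := {
  Mob :> nat -> Obj C;
  Mmap : forall m n : nat, Delta m n -> Mor C (Mob n) (Mob m);
  Mmap_id : forall n, Mmap (delta_id n) = idm (Mob n);
  Mmap_comp : forall l m n (g : Delta m n) (f : Delta l m),
      Mmap (delta_comp g f) = mcomp (Mmap f) (Mmap g)
}.
Arguments Mmap {C} s {m n}.

Definition face C (M : SimplicialModule C) n (i : 'I_n.+2) : Mor C (M n.+1) (M n) :=
  Mmap M (coface i).
Definition degen C (M : SimplicialModule C) n (i : 'I_n.+1) : Mor C (M n) (M n.+1) :=
  Mmap M (codeg i).

(* p_0 = 1,  p_{k+1} = (1 - s_{k,0} d_{k+1,1}) o ... o (1 - s_{k,k} d_{k+1,k+1}) *)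
Definition p_idem C (M : SimplicialModule C) (n : nat) : Mor C (M n) (M n) :=
  match n as n0 return Mor C (M n0) (M n0) with
  | 0 => idm (M 0)
  | k.+1 => foldr (fun f acc => mcomp f acc) (idm (M k.+1))
      [seq idm (M k.+1) - mcomp (degen M i) (face M (lift ord0 i)) | i <- enum 'I_k.+1]
  end.

Definition killed_by_upper_faces C (M : SimplicialModule C) (n : nat) (X : Obj C) :
    Mor C X (M n) -> Prop :=
  match n as n0 return Mor C X (M n0) -> Prop with
  | 0 => fun _ => True
  | k.+1 => fun h => forall i : 'I_k.+2, (0 < i)%N -> mcomp (face M i) h = 0
  end.

Definition is_upper_faces_kernel C (M : SimplicialModule C) (n : nat) (K : Obj C)
    (k : Mor C K (M n)) : Prop :=
  killed_by_upper_faces k /\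
  forall (X : Obj C) (h : Mor C X (M n)), killed_by_upper_faces h ->
    exists! u : Mor C X K, mcomp k u = h.

Arguments face {C} M {n} i.
Arguments degen {C} M {n} i.
Arguments p_idem {C} M n.
Arguments killed_by_upper_faces {C} M n {X} h.
Arguments is_upper_faces_kernel {C} M n {K} k.
Arguments is_kernel {C A B K} f k.

(* Main.v *)
Require Import Defs.
From HB Require Import structures.
From mathcomp Require Import all_boot all_order all_algebra.
From mathcomp Require Import zify.
Import GRing.Theory.
Local Open Scope ring_scope.

Set Implicit Arguments. Unset Strict Implicit.

Section Gen.
Variable C : PreAdditive.
Implicit Types A B D X : Obj C.

Lemma cA A B D X (h : Mor C D X) (g : Mor C B D) (f : Mor C A B) :
  mcomp h (mcomp g f) = mcomp (mcomp h g) f.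
Proof. exact: Defs.compA. Qed.

Lemma c0l A B D (f : Mor C A B) : mcomp (0 : Mor C B D) f = 0.
Proof.
have := compDl (0 : Mor C B D) 0 f; rewrite addr0 => H.
by apply: (addrI (mcomp 0 f)); rewrite -H addr0.
Qed.
Lemma c0r A B D (f : Mor C B D) : mcomp f (0 : Mor C A B) = 0.
Proof.
have := compDr f (0 : Mor C A B) 0; rewrite addr0 => H.
by apply: (addrI (mcomp f 0)); rewrite -H addr0.
Qed.
Lemma cNl A B D (g : Mor C B D) (f : Mor C A B) : mcomp (- g) f = - mcomp g f.
Proof. by apply: (addrI (mcomp g f)); rewrite -compDl !subrr c0l. Qed.
Lemma cNr A B D (g : Mor C B D) (f : Mor C A B) : mcomp g (- f) = - mcomp g f.
Proof. by apply: (addrI (mcomp g f)); rewrite -compDr !subrr c0r. Qed.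
Lemma cBl A B D (g1 g2 : Mor C B D) (f : Mor C A B) :
  mcomp (g1 - g2) f = mcomp g1 f - mcomp g2 f.
Proof. by rewrite compDl cNl. Qed.
Lemma cBr A B D (g : Mor C B D) (f1 f2 : Mor C A B) :
  mcomp g (f1 - f2) = mcomp g f1 - mcomp g f2.
Proof. by rewrite compDr cNr. Qed.

Lemma ext A B D (a : Mor C B D) (b : Mor C A B) c :
  mcomp a b = c -> forall X (f : Mor C X A), mcomp a (mcomp b f) = mcomp c f.
Proof. by move=> H X f; rewrite cA H. Qed.

Lemma ker_mono A B K (f : Mor C A B) (k : Mor C K A) :
  is_kernel f k -> forall X (u1 u2 : Mor C X K), mcomp k u1 = mcomp k u2 -> u1 = u2.
Proof.
case=> Hk Hu X u1 u2 E.
have H0 : mcomp f (mcomp k u1) = 0 by rewrite cA Hk c0l.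
have [u [_ Hu']] := Hu X (mcomp k u1) H0.
by rewrite -(Hu' u1) // (Hu' u2).
Qed.

Lemma complement (hC : weakly_idem_complete C) A N (i : Mor C N A) (r : Mor C A N) :
  mcomp r i = idm N ->
  exists (D : Obj C) (j : Mor C D A) (q : Mor C A D),
      mcomp q j = idm D /\ mcomp j q = idm A - mcomp i r /\
      mcomp r j = 0 /\ mcomp q i = 0 /\
      mcomp i r + mcomp j q = idm A.
Proof.
move=> Hri.
have [D [j Hk]] := hC _ _ r i Hri.
have Hk' := Hk; case: Hk' => Hrj Hu.
have H0 : mcomp r (idm A - mcomp i r) = 0 by rewrite cBr comp1r cA Hri comp1l subrr.
have [q [Hq _]] := Hu A (idm A - mcomp i r) H0.
exists D, j, q; split.
  apply: (ker_mono Hk); rewrite cA Hq cBl comp1l -cA Hrj c0r subr0 comp1r //.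
split=> //; split=> //; split.
  apply: (ker_mono Hk); rewrite cA Hq cBl comp1l -cA Hri comp1r subrr c0r //.
by rewrite Hq addrC subrK.
Qed.

Lemma step_split (hC : weakly_idem_complete C) A B N N' (s : Mor C B A) (d : Mor C A B)
  (i : Mor C N A) (r : Mor C A N) (i' : Mor C N' B) (r' : Mor C B N') :
  mcomp r i = idm N -> mcomp r' i' = idm N' -> mcomp d s = idm B ->
  mcomp (mcomp i r) s = mcomp s (mcomp i' r') ->
  exists N'' (i'' : Mor C N'' A) (r'' : Mor C A N''), mcomp r'' i'' = idm N'' /\
    mcomp i'' r'' = mcomp (mcomp i r) (mcomp (idm A - mcomp s d) (mcomp i r)).
Proof.
move=> Hri Hri' Hds Hc.
set al := mcomp (mcomp r s) i'; set be := mcomp r' (mcomp d i).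
have Hba : mcomp be al = idm N'.
  rewrite /be /al -!cA (cA i r) (cA (mcomp i r) s) Hc -!cA (cA d s) Hds comp1l.
  by rewrite (cA r' i') Hri' comp1l.
have [K [k Hk]] := hC _ _ be al Hba.
have Hk' := Hk; case: Hk' => Hbk Hu.
have H0 : mcomp be (idm N - mcomp al be) = 0 by rewrite cBr comp1r cA Hba comp1l subrr.
have [u [Hu1 _]] := Hu N (idm N - mcomp al be) H0.
have Huk : mcomp u k = idm K.
  apply: (ker_mono Hk); rewrite cA Hu1 cBl comp1l -cA Hbk c0r subr0 comp1r //.
exists K, (mcomp i k), (mcomp u r); split.
  by rewrite -cA (cA r i) Hri comp1l.
rewrite -cA (cA k u) Hu1 cBl comp1l cBr.
have Hab : mcomp al be = mcomp (mcomp r s) (mcomp d i).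
  have Hc2 : forall X (f : Mor C X B), mcomp s (mcomp i' (mcomp r' f)) = mcomp i (mcomp r (mcomp s f)).
    by move=> X f; rewrite (cA i') (cA s) -Hc -!cA.
  by rewrite /al /be -!cA Hc2 (ext Hri) comp1l.
rewrite Hab cBl comp1l cBr -!cA (ext Hri) comp1l.
by []. Qed.
End Gen.

Lemma Dext m n (f g : Delta m n) :
  (forall x : 'I_m.+1, (val (sval f x) = val (sval g x))%N) -> f = g.
Proof.
move=> H; apply: val_inj; apply/ffunP => x; apply: val_inj; exact: H.
Qed.

Section Simp.
Variable C : PreAdditive.
Variable M : SimplicialModule C.

Definition dd m i : Mor C (M m.+1) (M m) := face M (inord i : 'I_m.+2).
Definition ss m j : Mor C (M m) (M m.+1) := degen M (inord j : 'I_m.+1).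

Lemma cMM l m n (g : Delta m n) (f : Delta l m) :
  mcomp (Mmap M f) (Mmap M g) = Mmap M (delta_comp g f).
Proof. by rewrite Mmap_comp. Qed.

Ltac simpl_delta :=
  rewrite /dd /ss /face /degen ?cMM; try rewrite -Mmap_id; congr (Mmap M _);
  apply: Dext => x /=; rewrite !ffunE /= ?eta_funE /= /bump ?inordK.

Lemma I1 m j : (j <= m)%N -> mcomp (dd m j.+1) (ss m j) = idm (M m).
Proof.
move=> Hj; simpl_delta; try lia.
have := ltn_ord x; repeat (case: leqP => /= ?); lia.
Qed.

Ltac atomic t := lazymatch t with context [leq] => fail | _ => idtac end.
Ltac fin x := try lia; have ? := ltn_ord x; repeat match goal with
 | |- context [(?a <= ?c)%N] => atomic a; atomic c; case: (leqP a c) => ? /=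
 end; lia.

Lemma I2 m i j : (j.+1 < i)%N -> (i <= m.+2)%N ->
  mcomp (dd m.+1 i) (ss m.+1 j) = mcomp (ss m j) (dd m i.-1).
Proof. move=> H1 H2; simpl_delta; fin x. Qed.

Lemma I3 m j k : (k < j)%N -> (j <= m.+1)%N ->
  mcomp (ss m.+1 j) (ss m k) = mcomp (ss m.+1 k) (ss m j.-1).
Proof. move=> H1 H2; simpl_delta; fin x. Qed.

Lemma I4 m a b : (a < b)%N -> (b <= m.+2)%N ->
  mcomp (dd m a) (dd m.+1 b) = mcomp (dd m b.-1) (dd m.+1 a).
Proof. move=> H1 H2; simpl_delta; fin x. Qed.

Definition E m j : Mor C (M m.+1) (M m.+1) := idm _ - mcomp (ss m j) (dd m j.+1).
Definition Q m k : Mor C (M m.+1) (M m.+1) :=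
  foldr (fun f acc => mcomp f acc) (idm _) [seq E m j | j <- iota k (m.+1 - k)].
Definition R m k : Mor C (M m) (M m) :=
  match m as m0 return Mor C (M m0) (M m0) with 0 => idm _ | m'.+1 => Q m' k end.

Lemma QS m k : (k <= m)%N -> Q m k = mcomp (E m k) (Q m k.+1).
Proof.
move=> Hk; rewrite /Q.
have -> : (m.+1 - k = (m - k).+1)%N by lia.
by rewrite subSS.
Qed.

Lemma Qend m : Q m m.+1 = idm _.
Proof. by rewrite /Q subnn. Qed.

Lemma p_Q m : p_idem M m.+1 = Q m 0.
Proof.
rewrite /= /Q subn0 -val_enum_ord -map_comp; congr foldr; apply: eq_map => i /=.
rewrite /E /ss /dd inord_val; congr (_ - mcomp _ (face M _)).
by apply: val_inj => /=; rewrite inordK //= ltnS.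
Qed.

Lemma DE m k i : (k.+1 < i)%N -> (i <= m.+2)%N ->
  mcomp (dd m.+1 i) (E m.+1 k) = mcomp (E m k) (dd m.+1 i).
Proof.
move=> H1 H2; rewrite /E cBr cBl comp1r comp1l cA I2 // -cA -I4 //.
by rewrite cA.
Qed.

Lemma killedQ m k i : (k < i)%N -> (i <= m.+1)%N -> mcomp (dd m i) (Q m k) = 0.
Proof.
move Ht: (m.+1 - k)%N => t; elim: t k Ht i => [|t IH] k Ht i H1 H2; first lia.
rewrite QS; last lia.
have [->|Hi] := eqVneq i k.+1.
  by rewrite cA /E cBr comp1r cA I1 ?comp1l ?subrr ?c0l //; lia.
case: m Ht H2 IH => [|m'] Ht H2 IH; first lia.
rewrite cA DE; try lia.
by rewrite -cA IH ?c0r //; lia.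
Qed.

Lemma fixQ m k X (h : Mor C X (M m.+1)) :
  (forall i, (k < i)%N -> (i <= m.+1)%N -> mcomp (dd m i) h = 0) ->
  mcomp (Q m k) h = h.
Proof.
move Ht: (m.+1 - k)%N => t; elim: t k Ht => [|t IH] k Ht Hh.
  by rewrite /Q Ht /= comp1l.
rewrite QS; last lia.
rewrite -cA IH; last by move=> i Hi Hi'; apply: Hh; lia.
  by rewrite /E cBl comp1l -cA Hh ?c0r ?subr0 //; lia.
lia.
Qed.

Lemma QQ m k : (k <= m)%N -> mcomp (Q m k.+1) (Q m k) = Q m k.
Proof. move=> Hk; apply: fixQ => i H1 H2; apply: killedQ => //; lia. Qed.

Lemma ES m j k : (k < j)%N -> (j <= m.+1)%N ->
  mcomp (E m.+1 j) (ss m.+1 k) = mcomp (ss m.+1 k) (E m j.-1).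
Proof.
move=> H1 H2; rewrite /E cBl cBr comp1l comp1r -cA I2; try lia.
rewrite cA I3 // -cA.
by have -> : j.-1.+1 = j by lia.
Qed.

Lemma QsR m j k : (k < j)%N -> (j <= m.+1)%N ->
  mcomp (Q m j) (ss m k) = mcomp (ss m k) (R m j.-1).
Proof.
move Ht: (m.+1 - j)%N => t; elim: t j Ht => [|t IH] j Ht H1 H2.
  have -> : j = m.+1 by lia.
  rewrite Qend comp1l; case: (m) => [|m'] /=; first by rewrite comp1r.
  by rewrite Qend comp1r.
case: m Ht H2 IH => [|m'] Ht H2 IH; first lia.
rewrite QS; last lia.
rewrite -cA IH; try lia.
rewrite cA ES; try lia.
rewrite -cA /= [in RHS]QS; last lia.
by have -> : j.-1.+1 = j by lia.
Qed.

Lemma split_all (hC : weakly_idem_complete C) m k : (k <= m)%N ->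
  exists N (i : Mor C N (M m)) (r : Mor C (M m) N),
    mcomp r i = idm N /\ mcomp i r = R m k.
Proof.
elim: m k => [|m IHm] k Hk.
  by exists (M 0), (idm _), (idm _); rewrite comp1l.
move Ht: (m.+1 - k)%N => t; elim: t k Ht Hk => [|t IH] k Ht Hk.
  have -> : k = m.+1 by lia.
  by exists (M m.+1), (idm _), (idm _); rewrite /= Qend comp1l.
have [N [i [r [Hri Hir]]]] := IH k.+1 ltac:(lia) ltac:(lia).
have [N' [i' [r' [Hri' Hir']]]] := IHm k ltac:(lia).
have Hc : mcomp (mcomp i r) (ss m k) = mcomp (ss m k) (mcomp i' r').
  by rewrite Hir Hir' /= QsR //; lia.
have [N'' [i'' [r'' [H1 H2]]]] := step_split hC Hri Hri' (I1 (m:=m) (j:=k) ltac:(lia)) Hc.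
exists N'', i'', r''; split=> //.
by rewrite H2 Hir /= -/(E m k) -QS ?QQ //; lia.
Qed.
End Simp.

Unset Implicit Arguments. Set Strict Implicit.

Theorem mainTheorem3 (C : PreAdditive) (hC : weakly_idem_complete C)
    (M : SimplicialModule C) (n : nat) :
  exists (N : Obj C) (iota : Mor C N (M n)) (r : Mor C (M n) N),
    is_upper_faces_kernel M n iota /\
    mcomp r iota = idm N /\ mcomp iota r = p_idem M n /\
    exists (D : Obj C) (j : Mor C D (M n)) (q : Mor C (M n) D),
      mcomp q j = idm D /\ mcomp j q = idm (M n) - p_idem M n /\
      mcomp r j = 0 /\ mcomp q iota = 0 /\
      mcomp iota r + mcomp j q = idm (M n).
Proof.
case: n => [|m].
  exists (M 0), (idm _), (idm _); split.
    split=> // X h _; exists h; split; first by rewrite comp1l.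
    by move=> v; rewrite comp1l.
  split; first by rewrite comp1l.
  split; first by rewrite comp1l.
  have := complement hC (comp1l (idm (M 0))); by rewrite comp1l.
have [N [i [r [Hri Hir]]]] := split_all M hC (m:=m.+1) (k:=0) isT.
rewrite /= in Hir.
exists N, i, r; split; last first.
  split=> //; rewrite p_Q; split=> //; rewrite -Hir; exact: complement.
have Hf : forall i0 : 'I_m.+2, face M i0 = dd M m i0.
  by move=> i0; rewrite /dd inord_val.
split.
  move=> i0 Hi0; rewrite Hf.
  have -> : i = mcomp (Q M m 0) i by rewrite -Hir -cA Hri comp1r.
  by rewrite cA killedQ ?c0l //; rewrite -ltnS.
move=> X h Hh.
have Hh' : mcomp (Q M m 0) h = h.
  apply: fixQ => i0 H1 H2.
  have := Hh (inord i0) ltac:(rewrite inordK; lia).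
  by rewrite Hf /dd inordK //; lia.
exists (mcomp r h); split; first by rewrite cA Hir.
by move=> v <-; rewrite cA Hri comp1l.
Qed.
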